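(* Let $(X,d)$ be a complete metric space with $|X|\geqslant 3$ and let $T\colon X\to X$ be continuous and asymptotically regular. Suppose there exist $\alpha\in[0,\frac12)$ and functions $\beta_1,\beta_2,\beta_3\colon[0,\infty)\to[0,\infty)$ with $\limsup_{t\to0}\beta_i(t)<\infty$ for $i=1,2,3$, such that $$d(Tx,Ty)+d(Ty,Tz)+d(Tx,Tz)\leqslant \alpha\big(d(x,y)+d(y,z)+d(x,z)\big)+\beta_1(d(x,Tx))\,d(x,Tx)+\beta_2(d(y,Ty))\,d(y,Ty)+\beta_3(d(z,Tz))\,d(z,Tz)$$ for all pairwise distinct $x,y,z\in X$. Then $T$ has a fixed point, and $T$ has at most two fixed points.
   Context: A mapping $T\colon X\to X$ on a metric space is asymptotically regular if $\lim_{n\to\infty}d(T^{n+1}x,T^nx)=0$ for every $x\in X$. *)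

(* Defs.v *)
From Stdlib Require Export Reals.
Open Scope R_scope.

Definition is_metric {X : Type} (d : X -> X -> R) : Prop :=
  (forall x y, 0 <= d x y) /\
  (forall x y, d x y = 0 <-> x = y) /\
  (forall x y, d x y = d y x) /\
  (forall x y z, d x z <= d x y + d y z).

Definition d_cauchy {X : Type} (d : X -> X -> R) (u : nat -> X) : Prop :=
  forall eps, 0 < eps -> exists N, forall m n, (N <= m)%nat -> (N <= n)%nat ->
    d (u m) (u n) < eps.

Definition d_converges {X : Type} (d : X -> X -> R) (u : nat -> X) (l : X) : Prop :=
  forall eps, 0 < eps -> exists N, forall n, (N <= n)%nat -> d (u n) l < eps.

Definition d_complete {X : Type} (d : X -> X -> R) : Prop :=
  forall u, d_cauchy d u -> exists l, d_converges d u l.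

Definition d_continuous {X : Type} (d : X -> X -> R) (T : X -> X) : Prop :=
  forall x eps, 0 < eps -> exists delta, 0 < delta /\
    forall y, d x y < delta -> d (T x) (T y) < eps.

Definition asymptotically_regular {X : Type} (d : X -> X -> R) (T : X -> X) : Prop :=
  forall x, Un_cv (fun n => d (Nat.iter (S n) T x) (Nat.iter n T x)) 0.

(* limsup_{t -> 0} beta t < oo, for beta defined on [0,oo) (so t -> 0+,
   punctured): beta is bounded above on some interval (0, delta). *)
Definition limsup_at0_finite (beta : R -> R) : Prop :=
  exists M delta, 0 < delta /\ forall t, 0 < t < delta -> beta t <= M.

(* Main.v *)
Require Import Defs.
From Stdlib Require Import Reals.
From Stdlib Require Import Lra Lia Classical Arith.
Open Scope R_scope.

Theorem corollary4p7 (X : Type) (d : X -> X -> R) (T : X -> X)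
  (alpha : R) (beta1 beta2 beta3 : R -> R) :
  is_metric d ->
  d_complete d ->
  (exists a b c : X, a <> b /\ b <> c /\ a <> c) ->
  d_continuous d T ->
  asymptotically_regular d T ->
  0 <= alpha < 1 / 2 ->
  (forall t, 0 <= t -> 0 <= beta1 t) ->
  (forall t, 0 <= t -> 0 <= beta2 t) ->
  (forall t, 0 <= t -> 0 <= beta3 t) ->
  limsup_at0_finite beta1 ->
  limsup_at0_finite beta2 ->
  limsup_at0_finite beta3 ->
  (forall x y z, x <> y -> y <> z -> x <> z ->
     d (T x) (T y) + d (T y) (T z) + d (T x) (T z) <=
     alpha * (d x y + d y z + d x z)
     + beta1 (d x (T x)) * d x (T x)
     + beta2 (d y (T y)) * d y (T y)
     + beta3 (d z (T z)) * d z (T z)) ->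
  (exists x, T x = x) /\
  (forall x y z, T x = x -> T y = y -> T z = z ->
     x = y \/ y = z \/ x = z).
Proof.
  intros [dpos [dzero [dsym dtri]]] Hcomp [a0 [_ [_ _]]] Hcont Hreg Halpha
    Hb1 Hb2 Hb3 [M1 [d1 [Hd1 HM1]]] [M2 [d2 [Hd2 HM2]]] [M3 [d3 [Hd3 HM3]]] Hineq.
  assert (dxx : forall x, d x x = 0) by (intro x; apply dzero; reflexivity).
  split.
  2:{ intros x y z Fx Fy Fz.
      destruct (classic (x = y)) as [|nxy]; [now left|].
      destruct (classic (y = z)) as [|nyz]; [now right; left|].
      destruct (classic (x = z)) as [|nxz]; [now right; right|].
      exfalso. specialize (Hineq x y z nxy nyz nxz).
      rewrite Fx, Fy, Fz, !dxx in Hineq.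
      assert (0 < d x y).
      { destruct (dpos x y) as [h|h]; [exact h|]. exfalso; apply nxy, dzero; auto. }
      pose proof (dpos y z); pose proof (dpos x z). nra. }
  apply NNPP; intro Hnf.
  assert (H : forall x, T x <> x) by (intros x Hx; apply Hnf; exists x; exact Hx).
  clear Hnf.
  set (u := fun n => Nat.iter n T a0).
  assert (uS : forall n, u (S n) = T (u n)) by reflexivity.
  assert (epos : forall n, 0 < d (u (S n)) (u n)).
  { intro n. destruct (dpos (u (S n)) (u n)) as [h|h]; [exact h|].
    exfalso; apply (H (u n)); rewrite <- uS; apply dzero; auto. }
  assert (esmall : forall eta, 0 < eta -> exists N, forall n, (N <= n)%nat ->
             d (u (S n)) (u n) < eta).
  { intros eta Heta. destruct (Hreg a0 eta Heta) as [N HN]. exists N.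
    intros n Hn. specialize (HN n Hn). unfold R_dist in HN.
    rewrite Rminus_0_r, Rabs_pos_eq in HN by apply dpos. exact HN. }
  assert (uadd : forall i m, u (i + m)%nat = Nat.iter i T (u m)).
  { intros i m. unfold u. apply Nat.iter_add. }
  assert (distinct : forall n k, u n <> u (n + S k)%nat).
  { intros n k E.
    set (p := S k) in *.
    assert (per : forall j, u (n + j * p)%nat = u n).
    { induction j as [|j IH].
      - f_equal; lia.
      - replace (n + S j * p)%nat with (p + (n + j * p))%nat by lia.
        rewrite uadd, IH, <- uadd. replace (p + n)%nat with (n + p)%nat by lia.
        now symmetry. }
    pose proof (epos n) as Hp.
    destruct (esmall _ Hp) as [N HN].
    specialize (HN (n + N * p)%nat ltac:(unfold p; nia)).
    rewrite uS, per, <- uS in HN. lra. }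
  assert (neq : forall n m, n <> m -> u n <> u m).
  { intros n m Hnm E. destruct (Nat.lt_gt_cases n m) as [[Hl|Hl] _]; [exact Hnm| |].
    - apply (distinct n ((m - n - 1)%nat)). rewrite E. f_equal; lia.
    - apply (distinct m ((n - m - 1)%nat)). rewrite <- E. f_equal; lia. }
  set (M := Rabs M1 + Rabs M2 + Rabs M3).
  assert (HM : 0 <= M) by (unfold M; pose proof (Rabs_pos M1); pose proof (Rabs_pos M2);
                           pose proof (Rabs_pos M3); lra).
  set (del := Rmin d1 (Rmin d2 d3)).
  assert (Hdel : 0 < del) by (unfold del; repeat apply Rmin_pos; assumption).
  assert (bnd : forall (beta : R -> R) Mi di t, (forall t, 0 < t < di -> beta t <= Mi) ->
            Mi <= M -> del <= di -> 0 < t < del -> beta t * t <= M * t).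
  { intros beta Mi di t HB HMi Hdi Ht. apply Rmult_le_compat_r; [lra|].
    eapply Rle_trans; [apply HB; lra | exact HMi]. }
  assert (M1le : M1 <= M) by (unfold M; pose proof (Rle_abs M1); pose proof (Rabs_pos M2);
                           pose proof (Rabs_pos M3); lra).
  assert (M2le : M2 <= M) by (unfold M; pose proof (Rle_abs M2); pose proof (Rabs_pos M1);
                           pose proof (Rabs_pos M3); lra).
  assert (M3le : M3 <= M) by (unfold M; pose proof (Rle_abs M3); pose proof (Rabs_pos M2);
                           pose proof (Rabs_pos M1); lra).
  assert (del1 : del <= d1) by (unfold del; apply Rmin_l).
  assert (del2 : del <= d2) by (unfold del; eapply Rle_trans; [apply Rmin_r|apply Rmin_l]).
  assert (del3 : del <= d3) by (unfold del; eapply Rle_trans; [apply Rmin_r|apply Rmin_r]).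
  assert (key : forall n m, m <> n -> m <> S n ->
            d (u (S n)) (u n) < del -> d (u (S (S n))) (u (S n)) < del ->
            d (u (S m)) (u m) < del ->
            d (u n) (u m) <= 2 * (2 + M) * (d (u (S n)) (u n)
               + d (u (S (S n))) (u (S n)) + d (u (S m)) (u m))).
  { intros n m H1 H2 E1 E2 E3.
    assert (nab : u n <> u (S n)) by (apply neq; lia).
    assert (nbc : u (S n) <> u m) by (apply neq; lia).
    assert (nac : u n <> u m) by (apply neq; lia).
    pose proof (Hineq _ _ _ nab nbc nac) as Hi.
    rewrite <- !uS in Hi.
    pose proof (epos n); pose proof (epos (S n)); pose proof (epos m).
    pose proof (bnd beta1 M1 d1 (d (u n) (u (S n))) HM1 M1le del1
                  ltac:(rewrite dsym; split; assumption)).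
    pose proof (bnd beta2 M2 d2 (d (u (S n)) (u (S (S n)))) HM2 M2le del2
                  ltac:(rewrite dsym; split; assumption)).
    pose proof (bnd beta3 M3 d3 (d (u m) (u (S m))) HM3 M3le del3
                  ltac:(rewrite dsym; split; assumption)).
    rewrite (dsym (u n) (u (S n))), (dsym (u (S n)) (u (S (S n)))), (dsym (u m) (u (S m))) in *.
    pose proof (dtri (u n) (u (S n)) (u (S (S n)))).
    pose proof (dtri (u (S n)) (u (S (S n))) (u (S m))).
    pose proof (dtri (u (S n)) (u (S m)) (u m)).
    pose proof (dtri (u n) (u (S n)) (u (S m))).
    pose proof (dtri (u n) (u (S m)) (u m)).
    pose proof (dpos (u n) (u m)). pose proof (dpos (u (S n)) (u m)).
    pose proof (dpos (u (S n)) (u (S m))). pose proof (dpos (u (S (S n))) (u (S m))).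
    rewrite (dsym (u (S n)) (u n)) in *.
    rewrite (dsym (u (S (S n))) (u (S n))) in *.
    rewrite (dsym (u (S m)) (u m)) in *.
    set (P := d (u n) (u (S n)) + d (u (S n)) (u m) + d (u n) (u m)) in *.
    assert (P <= d (u (S n)) (u (S (S n))) + d (u (S (S n))) (u (S m))
                  + d (u (S n)) (u (S m))
                 + 2 * (d (u n) (u (S n)) + d (u (S n)) (u (S (S n))) + d (u m) (u (S m)))).
    { unfold P. lra. }
    assert (0 <= P) by (unfold P; lra).
    assert ((1 - alpha) * P <= (2 + M) * (d (u n) (u (S n)) + d (u (S n)) (u (S (S n))) + d (u m) (u (S m)))) by nra.
    assert (d (u n) (u m) <= P) by (unfold P; lra).
    nra. }
  assert (Hcauchy : d_cauchy d u).
  { intros eps Heps.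
    set (eta := Rmin del (eps / (6 * (2 + M)))).
    assert (Heta : 0 < eta) by (unfold eta; apply Rmin_pos; [lra|]; apply Rdiv_lt_0_compat; lra).
    assert (eta1 : eta <= del) by apply Rmin_l.
    assert (eta2 : eta <= eps / (6 * (2 + M))) by apply Rmin_r.
    assert (eta3 : 6 * (2 + M) * eta <= eps).
    { apply (Rmult_le_compat_l (6 * (2 + M))) in eta2; [|lra].
      field_simplify in eta2; lra. }
    destruct (esmall eta Heta) as [N HN]. exists N. intros n m Hn Hm.
    destruct (Nat.eq_dec m n) as [->|Hmn]; [rewrite dxx; lra|].
    destruct (Nat.eq_dec m (S n)) as [->|Hmn2].
    { rewrite dsym; specialize (HN n Hn); nra. }
    destruct (Nat.eq_dec n (S m)) as [->|Hmn3].
    { specialize (HN m Hm); nra. }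
    pose proof (HN n Hn); pose proof (HN (S n) ltac:(lia)); pose proof (HN m Hm).
    pose proof (key n m Hmn Hmn2 ltac:(lra) ltac:(lra) ltac:(lra)).
    pose proof (epos n); pose proof (epos (S n)); pose proof (epos m). nra. }
  destruct (Hcomp u Hcauchy) as [l Hl].
  apply (H l). apply dzero.
  destruct (dpos (T l) l) as [Hlt|]; [exfalso|lra].
  set (eps := d (T l) l) in *.
  destruct (Hcont l (eps / 2) ltac:(lra)) as [dl [Hdl Hc]].
  destruct (Hl dl Hdl) as [N1 HN1].
  destruct (Hl (eps / 2) ltac:(lra)) as [N2 HN2].
  specialize (HN1 (N1 + N2)%nat ltac:(lia)).
  specialize (HN2 (S (N1 + N2)) ltac:(lia)).
  rewrite dsym in HN1. specialize (Hc _ HN1). rewrite <- uS in Hc.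
  pose proof (dtri (T l) (u (S (N1 + N2))) l). unfold eps in *. lra.
Qed.
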